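(* Fix $x_0\in\mathbb{R}^{n_x}$. There exist a finite positive constant $\alpha_1(x_0)$ and, for each $i\in\{2,\dots,T\}$, a finite set $\mathcal{K}_i$ of sequences of non-negative integers of length $i-1$ and finite positive constants $\alpha_i^{(j_1,\dots,j_{i-1})}(x_0)$ (depending on $x_0$ and $(j_1,\dots,j_{i-1})$ but not on the observations or the control) such that for every control $u\in U$ and every sequence of observations $(y_1,\dots,y_T)$, the solution of the hybrid system starting at $x_0$ satisfies $\|x_1(t)\|_2\le\alpha_1(x_0)$ for all $t\in[0,1]$, and for all $i\in\{2,\dots,T\}$ and $t\in[i-1,i]$, $$\|x_i(t)\|_2\le\sum_{(j_1,\dots,j_{i-1})\in\mathcal{K}_i}\alpha_i^{(j_1,\dots,j_{i-1})}(x_0)\prod_{m=1}^{i-1}\|y_m\|_2^{j_m}.$$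
   Context: Fix positive integers $T,m,n_x,n_y$ and $\rho_{\max}\in(0,\infty)$; $B(0,\rho_{\max})$ is the closed Euclidean ball of radius $\rho_{\max}$ in $\mathbb{R}^m$; $U$ is the set of piecewise continuous $u:[0,T]\to\mathbb{R}^m$ with $\|u(t)\|_2\le\rho_{\max}$ for all $t$. $f:\mathbb{R}^{n_x}\times\mathbb{R}^m\to\mathbb{R}^{n_x}$ is continuously differentiable and there is $K_1\in[1,\infty)$ with $\|f(x',u')-f(x'',u'')\|_2\le K_1(\|x'-x''\|_2+\|u'-u''\|_2)$ for all $x',x''\in\mathbb{R}^{n_x}$, $u',u''\in B(0,\rho_{\max})$. $g:\mathbb{R}^{n_x}\times\mathbb{R}^{n_y}\to\mathbb{R}^{n_x}$ is continuous and differentiable in its first argument, and there are $K_2,\dots,K_5\ge0$ and positive integers $L_1,L_2$ such that for all $x,y$ both $\|g(x,y)\|_2$ and $\|\frac{\partial}{\partial x}g(x,y)\|_2$ are at most $K_2+K_3\|x\|_2^{L_1}+K_4\|y\|_2^{L_2}+K_5\|x\|_2^{L_1}\|y\|_2^{L_2}$. The hybrid system: $x_1$ on $[0,1]$ solves $\dot x_1=f(x_1,u)$, $x_1(0)=x_0$; for $i=2,\dots,T$, $x_i$ on $[i-1,i]$ solves $\dot x_i(t)=f(x_i(t),u(t))$ with $x_i(i-1)=g(x_{i-1}(i-1),y_{i-1})$; $x(t)=x_i(t)$ for $t\in[i-1,i)$, and $x(T)=g(x_T(T),y_T)$. *)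

(* Defs.v *)
From HB Require Import structures.
From mathcomp Require Import all_boot all_order all_algebra.
From mathcomp Require Import all_classical all_reals all_analysis.
Set Implicit Arguments. Unset Strict Implicit. Unset Printing Implicit Defensive.
Import Order.TTheory GRing.Theory Num.Theory.
Import numFieldNormedType.Exports.
Local Open Scope classical_set_scope.
Local Open Scope ring_scope.

Definition norm2 {R : realType} {n : nat} (v : 'rV[R]_n) : R :=
  Num.sqrt (\sum_(i < n) (v ord0 i) ^+ 2).

Definition piecewise_continuous {R : realType} {m : nat} (T : R)
    (u : R -> 'rV[R]_m) : Prop :=
  exists s : seq R,
    (forall t, 0 <= t <= T -> t \notin s ->
       {for t, {within `[0, T], continuous u}}) /\
    (forall t, t \in s -> 0 <= t <= T ->
       (t < T -> exists l : 'rV[R]_m, u x @[x --> t^'+] --> l) /\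
       (0 < t -> exists l : 'rV[R]_m, u x @[x --> t^'-] --> l)).

Definition admissible {R : realType} {m : nat} (T rho : R)
    (u : R -> 'rV[R]_m) : Prop :=
  piecewise_continuous T u /\ (forall t, 0 <= t <= T -> norm2 (u t) <= rho).

(* x solves  x'(t) = f(x(t), u(t))  on [a,b] (classical solution for a
   piecewise continuous control): x continuous on [a,b] and differentiable
   with derivative f(x t, u t) at every t in (a,b) outside a finite set. *)
Definition solves_on {R : realType} {nx m : nat}
    (f : 'rV[R]_nx -> 'rV[R]_m -> 'rV[R]_nx) (u : R -> 'rV[R]_m)
    (a b : R) (x : R -> 'rV[R]_nx) : Prop :=
  {within `[a, b], continuous x} /\
  exists s : seq R, forall t, a < t < b -> t \notin s ->
    is_derive t 1 x (f (x t) (u t)).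

(* The hybrid system: xs i is the piece x_i on [i-1, i], i = 1..T. *)
Definition hybrid_solution {R : realType} {nx m ny : nat} (T : nat)
    (f : 'rV[R]_nx -> 'rV[R]_m -> 'rV[R]_nx)
    (g : 'rV[R]_nx -> 'rV[R]_ny -> 'rV[R]_nx)
    (x0 : 'rV[R]_nx) (u : R -> 'rV[R]_m) (y : nat -> 'rV[R]_ny)
    (xs : nat -> R -> 'rV[R]_nx) : Prop :=
  xs 1%N 0 = x0 /\ solves_on f u 0 1 (xs 1%N) /\
  forall i : nat, (2 <= i <= T)%N ->
    xs i (i.-1)%:R = g (xs i.-1 (i.-1)%:R) (y i.-1) /\
    solves_on f u (i.-1)%:R i%:R (xs i).

(* Main.v *)
Require Import Defs.
From HB Require Import structures.
From mathcomp Require Import all_boot all_order all_algebra.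
From mathcomp Require Import all_classical all_reals all_analysis.
From mathcomp Require Import ring lra.
Import Order.TTheory GRing.Theory Num.Theory.
Import numFieldNormedType.Exports.
Local Open Scope classical_set_scope.
Local Open Scope ring_scope.

Section N.
Variable R : realType.

Definition dot {n} (a b : 'rV[R]_n) : R := \sum_(i < n) a ord0 i * b ord0 i.

Lemma sq_ge0 {n} (a : 'rV[R]_n) : 0 <= \sum_(i < n) (a ord0 i) ^+ 2.
Proof. by apply: sumr_ge0 => i _; rewrite sqr_ge0. Qed.

Lemma norm2_ge0 {n} (a : 'rV[R]_n) : 0 <= norm2 a.
Proof. exact: sqrtr_ge0. Qed.

Lemma norm2_sq {n} (a : 'rV[R]_n) : norm2 a ^+ 2 = \sum_(i < n) (a ord0 i) ^+ 2.
Proof. by rewrite /norm2 sqr_sqrtr // sq_ge0. Qed.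

Lemma dot_aa {n} (a : 'rV[R]_n) : dot a a = norm2 a ^+ 2.
Proof. by rewrite norm2_sq /dot; apply: eq_bigr => i _; rewrite expr2. Qed.

Lemma norm2_eq0 {n} {a : 'rV[R]_n} : norm2 a = 0 -> forall i, a ord0 i = 0.
Proof.
move=> h i; have h2 : \sum_(i < n) (a ord0 i) ^+ 2 = 0 by rewrite -norm2_sq h expr0n.
have := psumr_eq0P (fun i _ => sqr_ge0 (a ord0 i)) h2 (i:=i) isT.
by move/eqP; rewrite sqrf_eq0 => /eqP.
Qed.

Lemma cauchy_schwarz {n} (a b : 'rV[R]_n) : dot a b <= norm2 a * norm2 b.
Proof.
have [ha|ha] := eqVneq (norm2 a) 0.
  rewrite ha mul0r /dot big1 // => i _; by rewrite (norm2_eq0 ha) mul0r.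
have [hb|hb] := eqVneq (norm2 b) 0.
  rewrite hb mulr0 /dot big1 // => i _; by rewrite (norm2_eq0 hb) // mulr0.
set na := norm2 a; set nb := norm2 b.
have pa : 0 < na by rewrite lt_def ha norm2_ge0.
have pb : 0 < nb by rewrite lt_def hb norm2_ge0.
have ea : na ^+ 2 = \sum_(i < n) (a ord0 i) ^+ 2 := norm2_sq a.
have eb : nb ^+ 2 = \sum_(i < n) (b ord0 i) ^+ 2 := norm2_sq b.
have h1 : \sum_(i < n) (2 * (na * nb)) * (a ord0 i * b ord0 i)
   <= \sum_(i < n) (nb ^+ 2 * (a ord0 i) ^+ 2 + na ^+ 2 * (b ord0 i) ^+ 2).
  apply: ler_sum => i _.
  have := sqr_ge0 (a ord0 i * nb - b ord0 i * na); nra.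
rewrite big_split /= -!mulr_sumr -ea -eb in h1.
have key : 2 * (na * nb) * dot a b <= 2 * (na * nb) * (na * nb).
  by rewrite /dot; apply: (le_trans h1); rewrite le_eqVlt; apply/orP; left; apply/eqP; ring.
have pp : 0 < na * nb by apply: mulr_gt0.
have : dot a b <= na * nb by rewrite -(ler_pM2l (mulr_gt0 (ltr0Sn _ 1) pp)).
lra.
Qed.

Lemma norm2_triangle {n} (a b : 'rV[R]_n) : norm2 (a + b) <= norm2 a + norm2 b.
Proof.
have h : norm2 (a + b) ^+ 2 <= (norm2 a + norm2 b) ^+ 2.
  rewrite -!dot_aa.
  have -> : dot (a + b) (a + b) = dot a a + 2 * dot a b + dot b b.
    rewrite /dot mulr_sumr -!big_split /=; apply: eq_bigr => i _.
    rewrite !mxE; ring.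
  have := cauchy_schwarz a b; rewrite !dot_aa; nra.
rewrite -(ler_pXn2r (n:=2)) // ?inE ?norm2_ge0 //=.
- by rewrite nnegrE norm2_ge0.
- by rewrite nnegrE addr_ge0 // norm2_ge0.
Qed.

Lemma norm2_0 {n} : norm2 (0 : 'rV[R]_n) = 0.
Proof. by rewrite /norm2 big1 ?sqrtr0 // => i _; rewrite mxE expr0n. Qed.


Lemma nonincr_fin (f df : R -> R) (s : seq R) : forall a b, a <= b ->
  {within `[a, b], continuous f} ->
  (forall t, a < t < b -> t \notin s -> is_derive t 1 f (df t) /\ df t <= 0) ->
  f b <= f a.
Proof.
elim: s => [|p s IH] a b ab cf hd.
  case: (ltgtP a b) ab => // [altb|->] _; last by rewrite lexx.
  have io x : x \in `]a, b[ -> a < x < b by rewrite in_itv.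
  have [c cab e] := MVT altb (fun x xin => (hd x (io x xin) isT).1) cf.
  rewrite -subr_le0 e mulr_le0_ge0 //.
    by have [] := hd c (io c cab) isT.
  by rewrite subr_ge0 ltW.
have [pin|pout] := boolP (a < p < b).
  move: pin => /andP [ap pb].
  apply: (@le_trans _ _ (f p)).
    apply: (IH p b (ltW pb)).
      apply: continuous_subspaceW cf; apply: subset_itv; rewrite bnd_simp ?lexx ?ltW //.
    move=> t /andP [pt tb] ts; apply: hd; first by rewrite (lt_trans ap pt) tb.
    by rewrite in_cons negb_or ts andbT; rewrite gt_eqF.
  apply: (IH a p (ltW ap)).
    apply: continuous_subspaceW cf; apply: subset_itv; rewrite bnd_simp ?lexx ?ltW //.
  move=> t /andP [at0 tp] ts; apply: hd; first by rewrite at0 (lt_trans tp pb).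
  by rewrite in_cons negb_or ts andbT; rewrite lt_eqF.
apply: (IH a b ab cf) => t tab ts; apply: hd => //.
rewrite in_cons negb_or ts andbT; apply/eqP => etp; move: pout; by rewrite -etp tab.
Qed.

Lemma comp_derive {n} (x : R -> 'rV[R]_n) (t : R) (D : 'rV[R]_n) (i : 'I_n) :
  is_derive t 1 x D -> is_derive t 1 (fun s => x s ord0 i) (D ord0 i).
Proof.
move=> [dx <-]; apply: DeriveDef.
  by move/derivable_mxP: dx; apply.
by rewrite (derive_mx dx) mxE.
Qed.

Lemma sq_derive (g : R -> R) (t d : R) : is_derive t 1 g d ->
  is_derive t 1 (fun s => g s ^+ 2) (2 * g t * d).
Proof.
move=> h; have := is_deriveX 2 h.
move=> [h1 h2]; apply: DeriveDef; first exact: h1.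
by rewrite h2 /= expr1.
Qed.

Lemma V_derive {n} (x : R -> 'rV[R]_n) (t : R) (D : 'rV[R]_n) :
  is_derive t 1 x D ->
  is_derive t 1 (fun s => \sum_(i < n) (x s ord0 i) ^+ 2) (2 * dot (x t) D).
Proof.
move=> h.
have := is_derive_sum (h := fun i s => (x s ord0 i) ^+ 2)
  (fun i => sq_derive _ _ _ (@comp_derive _ x t D i h)).
rewrite fct_sumE => -[h1 h2]; apply: DeriveDef; first exact: h1.
rewrite h2 /dot mulr_sumr; apply: eq_bigr => i _; by rewrite mulrA.
Qed.

Lemma coord_cont {m n} (i : 'I_m) (j : 'I_n) :
  continuous (fun v : 'M[R]_(m, n) => v i j).
Proof.
move=> u A /nbhs_ballP[e /= e0 eA].
apply/nbhs_ballP; exists e => //= v [_ uv]; apply: eA.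
exact: uv.
Qed.

Lemma expk_derive (k t : R) :
  is_derive t 1 (fun s => expR (- (k * s))) (expR (- (k * t)) * - k).
Proof.
have h1 : is_derive t 1 (fun s : R => - (k * s)) (- k).
  have := is_deriveN (is_deriveZ k (is_derive_id t 1)).
  move=> [h h']; apply: DeriveDef; first exact: h.
  by rewrite h'; congr (- _); exact: mulr1.
have := @is_derive1_comp _ expR (fun s => - (k * s)) t _ _ (is_derive_expR _) h1.
move=> [h h']; apply: DeriveDef; first exact: h.
exact: h'.
Qed.

Lemma W_cont {n} (A : set R) (x : R -> 'rV[R]_n) (c k : R) :
  {within A, continuous x} ->
  {within A, continuous (fun s => (\sum_(i < n) (x s ord0 i) ^+ 2 + c) * expR (- (k * s)))}.
Proof.
move=> cx s.
pose S := subspace A.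
have e1 : {for s, continuous (fun r : S => expR (- (k * r)))}.
  apply: (continuous_subspaceT (f := fun s => expR (- (k * s)))) => r.
  apply: differentiable_continuous; apply/derivable1_diffP.
  by case: (expk_derive k r).
have hi : forall i : 'I_n, {for s, continuous (fun r : S => x r ord0 i ^+ 2)}.
  move=> i; apply: (@continuousM R S (fun r : S => x r ord0 i) (fun r : S => x r ord0 i));
    exact: (continuous_comp (cx s) (coord_cont ord0 i (x s))).
have hs : {for s, continuous (fun r : S => \sum_(i < n) x r ord0 i ^+ 2)}.
  rewrite -(fct_sumE _ _ (fun i (r : S) => x r ord0 i ^+ 2)).
  elim/big_ind: _ => //.
  - exact: cst_continuous.
  - by move=> f g hf hg; apply: continuousD.
have hc : {for s, continuous (fun r : S => \sum_(i < n) x r ord0 i ^+ 2 + c)}.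
  by apply: (@continuousD R R^o S (fun r : S => \sum_(i < n) x r ord0 i ^+ 2) (fun=> c)) => //; exact: cst_continuous.
exact: (@continuousM R S _ _ s hc e1).
Qed.

Lemma growth {n} (x F : R -> 'rV[R]_n) (a b A B : R) (s : seq R) :
  0 <= A -> 0 <= B -> a <= b -> b <= a + 1 ->
  {within `[a, b], continuous x} ->
  (forall t, a < t < b -> t \notin s ->
     is_derive t 1 x (F t) /\ norm2 (F t) <= A + B * norm2 (x t)) ->
  forall t, a <= t <= b ->
    norm2 (x t) <= expR (1 + 2 * B) * (norm2 (x a) + A ^+ 2 / (1 + 2 * B) + 1).
Proof.
move=> A0 B0 ab ba1 cx hd t /andP[at0 tb].
set k := 1 + 2 * B.
have kp : 0 < k by rewrite /k; lra.
set c := A ^+ 2 / k.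
have c0 : 0 <= c by rewrite /c divr_ge0 // ?sqr_ge0 ?ltW.
have kc : k * c = A ^+ 2 by rewrite /c mulrC divfK // gt_eqF.
pose V := fun s => \sum_(i < n) (x s ord0 i) ^+ 2.
pose e := fun s => expR (- (k * s)).
pose W := fun s => (V s + c) * e s.
pose df := fun r => (V r + c) * (e r * - k) + e r * (2 * dot (x r) (F r)).
have Wle : W t <= W a.
  apply: (@nonincr_fin W df s a t at0).
    have hw : {within `[a, b], continuous W} := W_cont _ _ c k cx.
    apply: (continuous_subspaceW _ hw).
    by apply: subset_itv; rewrite bnd_simp ?lexx.
  move=> r /andP[ar rt] rs.
  have rab : a < r < b by rewrite ar (lt_le_trans rt tb).
  have [hx hF] := hd r rab rs.
  split.
    have hV : is_derive r 1 (fun s => V s + c) (2 * dot (x r) (F r)).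
      have := is_deriveD (V_derive _ _ _ hx) (is_derive_cst c r 1).
      by move=> [h1 h2]; apply: DeriveDef; [exact: h1 | rewrite h2 addr0].
    have := is_deriveM hV (expk_derive k r).
    by move=> [h1 h2]; apply: DeriveDef; [exact: h1 | rewrite h2].
  have ep : 0 < e r by apply: expR_gt0.
  have nr := norm2_ge0 (x r).
  have nF := norm2_ge0 (F r).
  have cs := cauchy_schwarz (x r) (F r).
  have Vr : V r = norm2 (x r) ^+ 2 by rewrite norm2_sq.
  have key : 2 * dot (x r) (F r) <= k * (V r + c).
    rewrite mulrDr kc Vr /k.
    have h1 : norm2 (x r) * norm2 (F r) <= norm2 (x r) * (A + B * norm2 (x r)).
      by apply: ler_wpM2l.
    have := sqr_ge0 (norm2 (x r) - A); nra.
  rewrite /df.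
  have : e r * (2 * dot (x r) (F r)) <= e r * (k * (V r + c)) by rewrite ler_pM2l.
  lra.
have E1 : 1 <= expR k by have := expR_ge1Dx k; lra.
have Vt : norm2 (x t) ^+ 2 + c <= (norm2 (x a) ^+ 2 + c) * expR k.
  rewrite !norm2_sq -/(V t) -/(V a).
  have eK r : e r * expR (k * r) = 1 by rewrite /e expRN mulVf // gt_eqF // expR_gt0.
  have -> : V t + c = W t * expR (k * t) by rewrite /W -mulrA eK mulr1.
  have h1 : W t * expR (k * t) <= W a * expR (k * t).
    by rewrite ler_pM2r // expR_gt0.
  apply: (le_trans h1).
  rewrite /W -mulrA ler_wpM2l //; first by apply: addr_ge0 => //; apply: sumr_ge0 => i _; apply: sqr_ge0.
  rewrite /e -expRD ler_expR; nra.
have na := norm2_ge0 (x a).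
have nt := norm2_ge0 (x t).
have Ep : 0 <= expR k by apply: expR_ge0.
rewrite -(ler_pXn2r (n:=2)) // ?nnegrE //; last first.
  by apply: mulr_ge0 => //; lra.
have h2 : (norm2 (x a) ^+ 2 + c) * expR k <= (expR k * (norm2 (x a) + c + 1)) ^+ 2.
  set p := norm2 (x a); set E := expR k.
  have h3 : p ^+ 2 + c <= (p + c + 1) ^+ 2.
    have : 0 <= p * (c + 1) by apply: mulr_ge0 => //; lra.
    have : c <= (c + 1) ^+ 2.
      have -> : (c + 1) ^+ 2 = c ^+ 2 + 2 * c + 1 by ring.
      have := sqr_ge0 c; lra.
    have -> : (p + c + 1) ^+ 2 = p ^+ 2 + 2 * (p * (c + 1)) + (c + 1) ^+ 2 by ring.
    lra.
  have h4 : E <= E ^+ 2.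
    have E1' : 1 <= E := E1.
    have : 0 <= E * (E - 1) by apply: mulr_ge0; lra.
    have -> : E ^+ 2 = E * (E - 1) + E by ring.
    lra.
  rewrite exprMn.
  apply: (le_trans (y := E * (p + c + 1) ^+ 2)).
    by rewrite mulrC ler_wpM2l.
  by rewrite ler_wpM2r // sqr_ge0.
lra.
Qed.

Lemma step_ineq (K2 K3 K4 K5 C z w Om om : R) (N L1 L2 : nat) :
  0 <= K2 -> 0 <= K3 -> 0 <= K4 -> 0 <= K5 -> 0 <= z -> 0 <= w -> 0 <= C ->
  1 <= om -> om <= Om -> w <= Om -> z <= C * om ^+ N ->
  K2 + K3 * z ^+ L1 + K4 * w ^+ L2 + K5 * z ^+ L1 * w ^+ L2
  <= (K2 + K3 * C ^+ L1 + K4 + K5 * C ^+ L1) * Om ^+ (N * L1 + L2).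
Proof.
move=> k2 k3 k4 k5 z0 w0 C0 om1 oO wO zC.
have O1 : 1 <= Om by apply: le_trans oO.
have O0 : 0 <= Om by apply: le_trans O1.
set P := Om ^+ (N * L1); set Q := Om ^+ L2.
have P1 : 1 <= P by apply: exprn_ege1.
have Q1 : 1 <= Q by apply: exprn_ege1.
have hZ : z ^+ L1 <= C ^+ L1 * P.
  rewrite /P exprM -exprMn.
  apply: lerXn2r; rewrite ?nnegrE ?mulr_ge0 ?exprn_ge0 //.
  apply: (le_trans zC); apply: ler_wpM2l => //.
  by apply: lerXn2r; rewrite ?nnegrE //; apply: le_trans om1.
have hW : w ^+ L2 <= Q by apply: lerXn2r; rewrite ?nnegrE.
have Z0 : 0 <= z ^+ L1 by apply: exprn_ge0.
have W0 : 0 <= w ^+ L2 by apply: exprn_ge0.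
have CC0 : 0 <= C ^+ L1 by apply: exprn_ge0.
rewrite exprD -/P -/Q.
set Z := z ^+ L1 in hZ Z0 *; set Wv := w ^+ L2 in hW W0 *; set CC := C ^+ L1 in hZ CC0 *.
have PQ1 : 1 <= P * Q by rewrite -[1]mulr1 ler_pM.
have e1 : K2 <= K2 * (P * Q) by rewrite ler_peMr.
have e2 : K3 * Z <= K3 * CC * (P * Q).
  rewrite -mulrA ler_wpM2l //; apply: (le_trans hZ).
  by rewrite ler_wpM2l // ler_peMr // (le_trans _ P1).
have e3 : K4 * Wv <= K4 * (P * Q).
  rewrite ler_wpM2l //; apply: (le_trans hW); by rewrite ler_peMl // (le_trans _ Q1).
have e4 : K5 * Z * Wv <= K5 * CC * (P * Q).
  rewrite -!mulrA ler_wpM2l // mulrA; apply: ler_pM => //.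
have -> : (K2 + K3 * CC + K4 + K5 * CC) * (P * Q)
  = K2 * (P * Q) + K3 * CC * (P * Q) + K4 * (P * Q) + K5 * CC * (P * Q) by ring.
lra.
Qed.

Fixpoint om {ny} (y : nat -> 'rV[R]_ny) (j : nat) : R :=
  if j is j'.+1 then Num.max (om y j') (norm2 (y j'.+1)) else 1.

Lemma om_ge1 {ny} (y : nat -> 'rV[R]_ny) j : 1 <= om y j.
Proof. elim: j => [|j IH] /=; first by []. by rewrite le_max IH. Qed.

Lemma om_bound {ny} (y : nat -> 'rV[R]_ny) (p : nat) j :
  om y j ^+ p <= 1 + \sum_(0 <= k < j) norm2 (y k.+1) ^+ p.
Proof.
elim: j => [|j IH] /=; first by rewrite expr1n big_geq // addr0.
rewrite big_nat_recr //= addrA.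
have h0 := exprn_ge0 p (norm2_ge0 (y j.+1)).
have h1 : 0 <= om y j by apply: le_trans (om_ge1 y j).
case: (leP (om y j) (norm2 (y j.+1))) => h.
  have : 1 + \sum_(0 <= k < j) norm2 (y k.+1) ^+ p >= 0.
    apply: (le_trans _ IH); exact: exprn_ge0.
  lra.
lra.
Qed.
End N.

Fixpoint cbf {R : realType} (M D K2 K3 K4 K5 c0 : R) (L1 : nat) (j : nat) : R :=
  if j is j'.+1 then
    M * (K2 + K3 * cbf M D K2 K3 K4 K5 c0 L1 j' ^+ L1 + K4
         + K5 * cbf M D K2 K3 K4 K5 c0 L1 j' ^+ L1) + D
  else c0.

Fixpoint nef (L1 L2 : nat) (j : nat) : nat :=
  if j is j'.+1 then (nef L1 L2 j' * L1 + L2)%N else 0%N.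

Definition ekseq (len N k : nat) : seq nat :=
  mkseq (fun l => if l == k then N.+1 else 0%N) len.

Lemma ekseq_inj (len N : nat) : {in index_iota 0 len.+1 &, injective (ekseq len N)}.
Proof.
move=> k1 k2; rewrite !mem_index_iota /= => h1 h2 e.
have key : forall a b, (a < len)%N -> ekseq len N a = ekseq len N b -> a = b.
  move=> a b al eab; have := congr1 (fun s => nth 0%N s a) eab.
  rewrite /ekseq !nth_mkseq // eqxx; by case: eqP.
case: (ltnP k1 len) => l1; first exact: key.
case: (ltnP k2 len) => l2; first by symmetry; apply: key.
have -> : k1 = len by apply/eqP; rewrite eqn_leq l1 andbT -ltnS.
have -> : k2 = len by apply/eqP; rewrite eqn_leq l2 andbT -ltnS.
by [].
Qed.

Lemma sum_K {R : realType} {ny} (y : nat -> 'rV[R]_ny) (j N : nat) (al : R) :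
  \sum_(s <- [seq ekseq j N k | k <- index_iota 0 j.+1])
     al * \prod_(k < j) norm2 (y k.+1) ^+ nth 0%N s k
  = al * (1 + \sum_(0 <= k < j) norm2 (y k.+1) ^+ N.+1).
Proof.
rewrite big_map -mulr_sumr; congr (al * _).
rewrite big_nat_recr //= addrC; congr (_ + _).
  by rewrite big1 // => l _; rewrite /ekseq nth_mkseq // (ltn_eqF (ltn_ord l)) expr0.
apply: eq_big_nat => k /andP[_ hk].
rewrite (bigD1 (Ordinal hk)) //= big1 => [|l hl].
  by rewrite /ekseq nth_mkseq // eqxx mulr1.
rewrite /ekseq nth_mkseq //; case: eqP => [e|_]; last by rewrite expr0.
by exfalso; move/eqP: hl; apply; apply: val_inj.
Qed.
Theorem proposition6 (R : realType) (T m nx ny : nat) (rho_max : R)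
  (f : 'rV[R]_nx -> 'rV[R]_m -> 'rV[R]_nx)
  (g : 'rV[R]_nx -> 'rV[R]_ny -> 'rV[R]_nx)
  (K1 K2 K3 K4 K5 : R) (L1 L2 : nat) (x0 : 'rV[R]_nx) :
  (0 < T)%N -> (0 < m)%N -> (0 < nx)%N -> (0 < ny)%N -> 0 < rho_max ->
  (* f is continuously differentiable on R^nx x R^m *)
  (forall p : 'rV[R]_nx * 'rV[R]_m,
     differentiable (fun q : 'rV[R]_nx * 'rV[R]_m => f q.1 q.2) p) ->
  (forall v : 'rV[R]_nx * 'rV[R]_m,
     continuous (fun p : 'rV[R]_nx * 'rV[R]_m =>
       'd (fun q : 'rV[R]_nx * 'rV[R]_m => f q.1 q.2) p v)) ->
  (* Lipschitz condition *)
  1 <= K1 ->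
  (forall (x' x'' : 'rV[R]_nx) (u' u'' : 'rV[R]_m),
     norm2 u' <= rho_max -> norm2 u'' <= rho_max ->
     norm2 (f x' u' - f x'' u'') <= K1 * (norm2 (x' - x'') + norm2 (u' - u''))) ->
  (* g continuous, differentiable in its first argument, polynomial bounds *)
  continuous (fun q : 'rV[R]_nx * 'rV[R]_ny => g q.1 q.2) ->
  (forall (x : 'rV[R]_nx) (y : 'rV[R]_ny), differentiable (fun z => g z y) x) ->
  0 <= K2 -> 0 <= K3 -> 0 <= K4 -> 0 <= K5 -> (0 < L1)%N -> (0 < L2)%N ->
  (forall (x : 'rV[R]_nx) (y : 'rV[R]_ny),
     norm2 (g x y) <= K2 + K3 * norm2 x ^+ L1 + K4 * norm2 y ^+ L2
                      + K5 * norm2 x ^+ L1 * norm2 y ^+ L2) ->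
  (* operator 2-norm of the Jacobian d/dx g(x,y) is bounded by the same *)
  (forall (x : 'rV[R]_nx) (y : 'rV[R]_ny) (v : 'rV[R]_nx),
     norm2 ('d (fun z => g z y) x v)
       <= (K2 + K3 * norm2 x ^+ L1 + K4 * norm2 y ^+ L2
           + K5 * norm2 x ^+ L1 * norm2 y ^+ L2) * norm2 v) ->
  exists alpha1 : R, 0 < alpha1 /\
  exists (K : nat -> seq (seq nat)) (alpha : nat -> seq nat -> R),
    (forall i : nat, (2 <= i <= T)%N ->
       uniq (K i) /\
       forall j, j \in K i -> size j = i.-1 /\ 0 < alpha i j) /\
    forall (u : R -> 'rV[R]_m) (y : nat -> 'rV[R]_ny)
           (xs : nat -> R -> 'rV[R]_nx),
      admissible T%:R rho_max u ->
      hybrid_solution T f g x0 u y xs ->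
      (forall t : R, 0 <= t <= 1 -> norm2 (xs 1%N t) <= alpha1) /\
      (forall (i : nat) (t : R), (2 <= i <= T)%N ->
         (i.-1)%:R <= t <= i%:R ->
         norm2 (xs i t)
           <= \sum_(j <- K i) alpha i j *
                \prod_(k < i.-1) norm2 (y k.+1) ^+ nth 0%N j k).
Proof.
move=> T0 m0 nx0 ny0 rho0 fdiff fcont K1ge1 flip gcont gdiff K20 K30 K40 K50 L10 L20 gb gdb.
set F0 := norm2 (f 0 0).
set A := K1 * rho_max + F0.
set B := K1.
set M := expR (1 + 2 * B).
set D := M * (A ^+ 2 / (1 + 2 * B) + 1).
have B0 : 0 <= B by rewrite /B; lra.
have A0 : 0 <= A by rewrite /A addr_ge0 ?mulr_ge0 ?norm2_ge0 //; lra.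
have M0 : 0 <= M by apply: expR_ge0.
have D0 : 0 <= D.
  apply: mulr_ge0 => //; apply: addr_ge0 => //; apply: divr_ge0; rewrite ?sqr_ge0 //; lra.
have piece : forall u, admissible T%:R rho_max u -> forall (a : R) (xi : R -> 'rV[R]_nx),
    forall b, 0 <= a -> b = a + 1 -> b <= T%:R -> solves_on f u a b xi ->
    forall t, a <= t <= b -> norm2 (xi t) <= M * norm2 (xi a) + D.
  move=> u [_ ub] a xi b a0 -> aT [cxi [s hs]] t ht.
  have := @growth R nx xi (fun r => f (xi r) (u r)) a (a + 1) A B s A0 B0 _ (lexx _) cxi _ t ht.
  have -> : M * norm2 (xi a) + D = expR (1 + 2 * B) * (norm2 (xi a) + A ^+ 2 / (1 + 2 * B) + 1).
    by rewrite /D /M; ring.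
  apply.
    lra.
  move=> r /andP[ar rb] rs; split; first by apply: hs => //; rewrite ar rb.
  have ur : norm2 (u r) <= rho_max by apply: ub; apply/andP; split; lra.
  have n00 : norm2 (0 : 'rV[R]_m) <= rho_max by rewrite norm2_0; lra.
  have h1 := flip (xi r) 0 (u r) 0 ur n00.
  rewrite !subr0 in h1.
  have h2 := @norm2_triangle R _ (f (xi r) (u r) - f 0 0) (f 0 0).
  rewrite subrK in h2.
  have h3 : K1 * norm2 (u r) <= K1 * rho_max by apply: ler_wpM2l => //; lra.
  rewrite mulrDr in h1; rewrite /A /B /F0; lra.
pose cb := cbf M D K2 K3 K4 K5 (M * norm2 x0 + D) L1.
pose ne := nef L1 L2.
have cb0 : forall j, 0 <= cb j.
  elim=> [|j IH]; rewrite /cb /=; first by apply: addr_ge0 => //; apply: mulr_ge0 => //; apply: norm2_ge0.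
  apply: addr_ge0 => //; apply: mulr_ge0 => //; (repeat apply: addr_ge0) => //; apply: mulr_ge0 => //; exact: exprn_ge0.
exists (cb 0%N + 1); split; first by have := cb0 0%N; lra.
exists (fun i => [seq ekseq i.-1 (ne i.-1) k | k <- index_iota 0 i]), (fun i _ => cb i.-1 + 1).
split.
  move=> [|i] hi; first by [].
  split.
    by rewrite map_inj_in_uniq; [apply: iota_uniq | apply: ekseq_inj].
  move=> j /mapP [k _ ->]; split; first by rewrite size_mkseq.
  by have := cb0 i; lra.
move=> u y xs hadm [h1 [hs1 hrest]].
have claim : forall j, (j.+1 <= T)%N -> forall t, j%:R <= t <= j.+1%:R ->
    norm2 (xs j.+1 t) <= cb j * @om R _ y j ^+ ne j.
  elim=> [|j IH] hj t ht.
    rewrite /= expr0 mulr1.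
    have := piece u hadm 0 (xs 1%N) 1 (lexx 0) _ _ hs1 t ht.
    rewrite h1; apply; first by rewrite add0r.
    by rewrite ler1n.
  have [e hs] := hrest j.+2 hj.
  rewrite /= in e hs.
  have := piece u hadm j.+1%:R (xs j.+2) j.+2%:R (ler0n _ _) _ _ hs t ht.
  rewrite e => hp.
  move: hp; rewrite natr1 ler_nat => /(_ erefl hj) hp'.
  have hg := gb (xs j.+1 j.+1%:R) (y j.+1).
  have ihh : (j%:R : R) <= (j.+1%:R : R) <= (j.+1%:R : R).
    by apply/andP; split; rewrite ler_nat.

  have ih := IH (ltnW hj) _ ihh.
  have omle : om R y j <= om R y j.+1 by rewrite /= le_max lexx.
  have wle : norm2 (y j.+1) <= om R y j.+1 by rewrite /= le_max lexx orbT.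
  have hst := @step_ineq R K2 K3 K4 K5 (cb j) (norm2 (xs j.+1 j.+1%:R)) (norm2 (y j.+1))
    (om R y j.+1) (om R y j) (ne j) L1 L2 K20 K30 K40 K50 (norm2_ge0 _ _) (norm2_ge0 _ _) (cb0 j)
    (om_ge1 _ _ _) omle wle ih.
  have hO : 1 <= om R y j.+1 ^+ (ne j * L1 + L2) by apply: exprn_ege1; exact: om_ge1.
  rewrite /cb /= -/(cb j) /ne /= -/(ne j).
  set G := K2 + K3 * cb j ^+ L1 + K4 + K5 * cb j ^+ L1 in hst *.
  set P := om R y j.+1 ^+ (ne j * L1 + L2) in hst hO *.
  apply: (le_trans hp').
  have : M * norm2 (g (xs j.+1 j.+1%:R) (y j.+1)) <= M * (G * P).
    by apply: ler_wpM2l => //; apply: le_trans hg hst.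
  have : D <= D * P by rewrite ler_peMr.
  have -> : (M * G + D) * P = M * (G * P) + D * P by ring.
  lra.
split.
  move=> t ht; apply: (le_trans (claim 0%N T0 t ht)).
  rewrite /= expr0 mulr1; lra.
move=> [|j] t //= hi ht.
have hc := claim j (andP hi).2 t ht.
rewrite sum_K; apply: (le_trans hc).
have ob := om_bound R y (ne j).+1 j.
have o1 := om_ge1 R y j.
have h1' : om R y j ^+ ne j <= om R y j ^+ (ne j).+1 by apply: ler_weXn2l.
have c0 := cb0 j.
have S0 : 0 <= 1 + \sum_(0 <= k < j) norm2 (y k.+1) ^+ (ne j).+1.
  apply: addr_ge0 => //; apply: sumr_ge0 => k _; apply: exprn_ge0; apply: norm2_ge0.
apply: ler_pM => //; first by apply: exprn_ge0; apply: le_trans o1.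
  lra.
exact: le_trans h1' ob.
Qed.
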